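(* If $\Gamma\vdash M$ is derivable in $\ell\Lambda_\infty^{4S}$ and $M\to N$, then $\Delta\vdash N$ is derivable in $\ell\Lambda_\infty^{4S}$ for some environment $\Delta$ with $\Gamma\prec\Delta$.
   Context: Preterms are possibly infinite trees generated by $M ::= x \mid MN \mid \lambda x.M \mid \lambda^{\downarrow}x.M \mid \lambda^{\uparrow}x.M \mid \downarrow M \mid \uparrow M$ ($\downarrow M$ inductive box, $\uparrow M$ coinductive box); substitution is capture-avoiding. Patterns are $x,\ \downarrow x,\ \uparrow x,\ \#x,\ \dagger x$; an environment is a finite set of patterns with each variable in at most one pattern; a linear environment is a set of variables, with $\#\Theta,\downarrow\Theta,\uparrow\Theta,\dagger\Theta$ the correspondingly marked sets; commas denote disjoint unions. $\Upsilon,\Pi$ range over environments with only patterns $y$ or $\downarrow y$; $\Theta,\Xi,\Psi,\Phi$ over linear environments. The system $\ell\Lambda_\infty^{4S}$ has rules: (vl) $\#\Theta,\uparrow\Xi,\dagger\Psi,x\vdash x$; (vd) $\#\Theta,\uparrow\Xi,\dagger\Psi,\#x\vdash x$; (va) $\#\Theta,\uparrow\Xi,\dagger\Psi,\dagger x\vdash x$; (a) from $\Upsilon,\#\Theta,\uparrow\Xi,\dagger\Psi\vdash M$ and $\Pi,\#\Theta,\uparrow\Xi,\dagger\Psi\vdash N$ infer $\Upsilon,\Pi,\#\Theta,\uparrow\Xi,\dagger\Psi\vdash MN$; (ll) $\Gamma,x\vdash M$ gives $\Gamma\vdash\lambda x.M$; (li)$_1$ $\Gamma,\#x\vdash M$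 gives $\Gamma\vdash\lambda^\downarrow x.M$; (li)$_2$ $\Gamma,\downarrow x\vdash M$ gives $\Gamma\vdash\lambda^\downarrow x.M$; (lc) $\Gamma,\uparrow x\vdash M$ gives $\Gamma\vdash\lambda^\uparrow x.M$; (mi) from $\Xi,\uparrow\Psi,\dagger\Phi\vdash M$ infer $\#\Theta,\downarrow\Xi,\uparrow\Psi,\dagger\Phi\vdash\downarrow M$; (mc) from $\dagger\Xi,\dagger\Psi\vdash M$ infer $\#\Theta,\uparrow\Xi,\dagger\Psi\vdash\uparrow M$. (mc) is coinductive, others inductive: derivable judgments are roots of possibly infinite derivation trees in which every infinite branch contains infinitely many (mc) instances. $\Gamma\prec\Delta$ means $\Delta$ is obtained from $\Gamma$ by replacing some patterns $\downarrow x$ by $\#x$. Basic reduction: $(\lambda x.M)N\mapsto M[N/x]$, $(\lambda^\downarrow x.M)(\downarrow N)\mapsto M[N/x]$, $(\lambda^\uparrow x.M)(\uparrow N)\mapsto M[N/x]$; $M\to N$ iff $M=C[L]$, $N=C[P]$ with $L\mapsto P$ and $C$ a one-hole context (hole at a finite position). *)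

(* Defs.v *)
From Stdlib Require Import Arith.

CoInductive term : Type :=
| Var  : nat -> term
| App  : term -> term -> term
| Lam  : term -> term
| LamI : term -> term          (* lambda^down x. M   *)
| LamC : term -> term          (* lambda^up x. M     *)
| BoxI : term -> term          (* inductive box  (down M) *)
| BoxC : term -> term.         (* coinductive box (up M)  *)

(* equality of (infinite) trees = bisimilarity *)
CoInductive bisim : term -> term -> Prop :=
| bs_var n : bisim (Var n) (Var n)
| bs_app M M' N N' : bisim M M' -> bisim N N' -> bisim (App M N) (App M' N')
| bs_lam M M' : bisim M M' -> bisim (Lam M) (Lam M')
| bs_lamI M M' : bisim M M' -> bisim (LamI M) (LamI M')
| bs_lamC M M' : bisim M M' -> bisim (LamC M) (LamC M')
| bs_boxI M M' : bisim M M' -> bisim (BoxI M) (BoxI M')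
| bs_boxC M M' : bisim M M' -> bisim (BoxC M) (BoxC M').

CoFixpoint lift (c : nat) (M : term) : term :=
  match M with
  | Var n => Var (if n <? c then n else S n)
  | App M1 M2 => App (lift c M1) (lift c M2)
  | Lam M1 => Lam (lift (S c) M1)
  | LamI M1 => LamI (lift (S c) M1)
  | LamC M1 => LamC (lift (S c) M1)
  | BoxI M1 => BoxI (lift c M1)
  | BoxC M1 => BoxC (lift c M1)
  end.

CoFixpoint subst (k : nat) (N : term) (M : term) : term :=
  match M with
  | Var n => if n =? k then N else if k <? n then Var (pred n) else Var n
  | App M1 M2 => App (subst k N M1) (subst k N M2)
  | Lam M1 => Lam (subst (S k) (lift 0 N) M1)
  | LamI M1 => LamI (subst (S k) (lift 0 N) M1)
  | LamC M1 => LamC (subst (S k) (lift 0 N) M1)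
  | BoxI M1 => BoxI (subst k N M1)
  | BoxC M1 => BoxC (subst k N M1)
  end.

Inductive basic : term -> term -> Prop :=
| b_beta M N : basic (App (Lam M) N) (subst 0 N M)
| b_betaI M N : basic (App (LamI M) (BoxI N)) (subst 0 N M)
| b_betaC M N : basic (App (LamC M) (BoxC N)) (subst 0 N M).

(* one-hole contexts, hole at a finite position *)
Inductive ctx : Type :=
| Hole : ctx
| CAppL : ctx -> term -> ctx
| CAppR : term -> ctx -> ctx
| CLam : ctx -> ctx
| CLamI : ctx -> ctx
| CLamC : ctx -> ctx
| CBoxI : ctx -> ctx
| CBoxC : ctx -> ctx.

Fixpoint plug (C : ctx) (L : term) : term :=
  match C with
  | Hole => L
  | CAppL C1 N => App (plug C1 L) N
  | CAppR M C1 => App M (plug C1 L)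
  | CLam C1 => Lam (plug C1 L)
  | CLamI C1 => LamI (plug C1 L)
  | CLamC C1 => LamC (plug C1 L)
  | CBoxI C1 => BoxI (plug C1 L)
  | CBoxC C1 => BoxC (plug C1 L)
  end.

Definition red (M N : term) : Prop :=
  exists C L P, basic L P /\ bisim M (plug C L) /\ bisim N (plug C P).

(* pattern kinds:  x, down x, up x, #x, dagger x *)
Inductive kind : Type := KVar | KDown | KUp | KHash | KDag.

Definition env := nat -> option kind.

Definition env_finite (G : env) : Prop := exists n, forall i, n <= i -> G i = None.

Definition ext (p : option kind) (G : env) : env :=
  fun i => match i with 0 => p | S j => G j end.

(* patterns allowed in  #Theta, up Xi, dagger Psi *)
Definition lin_ok (o : option kind) : Prop :=
  o = None \/ o = Some KHash \/ o = Some KUp \/ o = Some KDag.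

(* G = Upsilon,Pi,#Theta,upXi,daggerPsi ; G1 = Upsilon,#Theta,..., G2 = Pi,#Theta,... *)
Definition app_split (G G1 G2 : env) : Prop :=
  forall i, match G i with
            | None => G1 i = None /\ G2 i = None
            | Some KVar => (G1 i = Some KVar /\ G2 i = None) \/ (G1 i = None /\ G2 i = Some KVar)
            | Some KDown => (G1 i = Some KDown /\ G2 i = None) \/ (G1 i = None /\ G2 i = Some KDown)
            | Some k => G1 i = Some k /\ G2 i = Some k
            end.

(* G = #Theta, down Xi, up Psi, dagger Phi ;  G' = Xi, up Psi, dagger Phi *)
Definition mi_env (G G' : env) : Prop :=
  forall i, match G i with
            | None => G' i = None
            | Some KHash => G' i = None
            | Some KDown => G' i = Some KVar
            | Some KUp => G' i = Some KUp
            | Some KDag => G' i = Some KDag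
            | Some KVar => False
            end.

(* G = #Theta, up Xi, dagger Psi ;  G' = dagger Xi, dagger Psi *)
Definition mc_env (G G' : env) : Prop :=
  forall i, match G i with
            | None => G' i = None
            | Some KHash => G' i = None
            | Some KUp => G' i = Some KDag
            | Some KDag => G' i = Some KDag
            | Some KVar => False
            | Some KDown => False
            end.

(* One layer of rules: all rules inductive (premises in derI X), except (mc),
   whose premise is taken from X (the coinductive hypothesis). *)
Inductive derI (X : env -> term -> Prop) : env -> term -> Prop :=
| d_vl G x : G x = Some KVar -> (forall y, y <> x -> lin_ok (G y)) -> derI X G (Var x)
| d_vd G x : G x = Some KHash -> (forall y, y <> x -> lin_ok (G y)) -> derI X G (Var x)
| d_va G x : G x = Some KDag -> (forall y, y <> x -> lin_ok (G y)) -> derI X G (Var x)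
| d_a G G1 G2 M N : app_split G G1 G2 -> derI X G1 M -> derI X G2 N -> derI X G (App M N)
| d_ll G M : derI X (ext (Some KVar) G) M -> derI X G (Lam M)
| d_li1 G M : derI X (ext (Some KHash) G) M -> derI X G (LamI M)
| d_li2 G M : derI X (ext (Some KDown) G) M -> derI X G (LamI M)
| d_lc G M : derI X (ext (Some KUp) G) M -> derI X G (LamC M)
| d_mi G G' M : mi_env G G' -> derI X G' M -> derI X G (BoxI M)
| d_mc G G' M : mc_env G G' -> X G' M -> derI X G (BoxC M).

(* Derivable = greatest fixed point  nu X. mu Y. F(X,Y): derivation trees whose
   infinite branches all contain infinitely many (mc) instances. *)
Definition der (G : env) (M : term) : Prop :=
  exists X : env -> term -> Prop, (forall G' M', X G' M' -> derI X G' M') /\ X G M.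

Definition env_prec (G D : env) : Prop :=
  forall i, D i = G i \/ (G i = Some KDown /\ D i = Some KHash).

(* Main.v *)
Require Import Defs.
From Stdlib Require Import Arith Lia FunctionalExtensionality.

Definition frob (t : term) : term :=
  match t with
  | Var n => Var n | App a b => App a b | Lam a => Lam a | LamI a => LamI a
  | LamC a => LamC a | BoxI a => BoxI a | BoxC a => BoxC a end.
Lemma frob_eq t : t = frob t. Proof. destruct t; reflexivity. Qed.

Lemma subst_Var k N n : subst k N (Var n) = if n =? k then N else if k <? n then Var (pred n) else Var n.
Proof. rewrite (frob_eq (subst k N (Var n))). simpl. destruct (n =? k); [destruct N|destruct (k <? n)]; reflexivity. Qed.
Lemma subst_App k N a b : subst k N (App a b) = App (subst k N a) (subst k N b).
Proof. rewrite (frob_eq (subst k N (App a b))). reflexivity. Qed.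
Lemma subst_Lam k N a : subst k N (Lam a) = Lam (subst (S k) (lift 0 N) a).
Proof. rewrite (frob_eq (subst k N (Lam a))). reflexivity. Qed.
Lemma subst_LamI k N a : subst k N (LamI a) = LamI (subst (S k) (lift 0 N) a).
Proof. rewrite (frob_eq (subst k N (LamI a))). reflexivity. Qed.
Lemma subst_LamC k N a : subst k N (LamC a) = LamC (subst (S k) (lift 0 N) a).
Proof. rewrite (frob_eq (subst k N (LamC a))). reflexivity. Qed.
Lemma subst_BoxI k N a : subst k N (BoxI a) = BoxI (subst k N a).
Proof. rewrite (frob_eq (subst k N (BoxI a))). reflexivity. Qed.
Lemma subst_BoxC k N a : subst k N (BoxC a) = BoxC (subst k N a).
Proof. rewrite (frob_eq (subst k N (BoxC a))). reflexivity. Qed.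

Lemma lift_Var c n : lift c (Var n) = Var (if n <? c then n else S n).
Proof. rewrite (frob_eq (lift c (Var n))). reflexivity. Qed.
Lemma lift_App c a b : lift c (App a b) = App (lift c a) (lift c b).
Proof. rewrite (frob_eq (lift c (App a b))). reflexivity. Qed.
Lemma lift_Lam c a : lift c (Lam a) = Lam (lift (S c) a).
Proof. rewrite (frob_eq (lift c (Lam a))). reflexivity. Qed.
Lemma lift_LamI c a : lift c (LamI a) = LamI (lift (S c) a).
Proof. rewrite (frob_eq (lift c (LamI a))). reflexivity. Qed.
Lemma lift_LamC c a : lift c (LamC a) = LamC (lift (S c) a).
Proof. rewrite (frob_eq (lift c (LamC a))). reflexivity. Qed.
Lemma lift_BoxI c a : lift c (BoxI a) = BoxI (lift c a).
Proof. rewrite (frob_eq (lift c (BoxI a))). reflexivity. Qed.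
Lemma lift_BoxC c a : lift c (BoxC a) = BoxC (lift c a).
Proof. rewrite (frob_eq (lift c (BoxC a))). reflexivity. Qed.

Lemma derI_mono (X Y : env -> term -> Prop) G M :
  derI X G M -> (forall G M, X G M -> Y G M) -> derI Y G M.
Proof. intros H HXY; induction H. eapply d_vl; eauto. eapply d_vd; eauto. eapply d_va; eauto. eapply d_a; eauto. eapply d_ll; eauto. eapply d_li1; eauto. eapply d_li2; eauto. eapply d_lc; eauto. eapply d_mi; eauto. eapply d_mc; eauto. Qed.

Lemma der_unfold G M : der G M -> derI der G M.
Proof. intros [X [HX HG]]. apply derI_mono with X; auto. intros G' M' H. exists X; auto. Qed.

Lemma der_fold G M : derI der G M -> der G M.
Proof. intros H. exists (fun G M => derI der G M); split; auto.
  intros G' M' H'. apply derI_mono with der; auto. intros; apply der_unfold; auto. Qed.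

Lemma der_coind (X : env -> term -> Prop) :
  (forall G M, X G M -> derI (fun G M => X G M \/ der G M) G M) ->
  forall G M, X G M -> der G M.
Proof. intros HX G M H. exists (fun G M => X G M \/ der G M); split; auto.
  intros G' M' [H'|H']; auto. apply derI_mono with der. apply der_unfold; auto. auto. Qed.

Definition asp (e a b : option kind) : Prop :=
  match e with
  | None => a = None /\ b = None
  | Some KVar => (a = Some KVar /\ b = None) \/ (a = None /\ b = Some KVar)
  | Some KDown => (a = Some KDown /\ b = None) \/ (a = None /\ b = Some KDown)
  | Some k => a = Some k /\ b = Some k
  end.
Lemma asp_iff G G1 G2 : app_split G G1 G2 <-> forall i, asp (G i) (G1 i) (G2 i).
Proof. reflexivity. Qed.

Definition mio (o : option kind) := match o with Some KHash => None | Some KDown => Some KVar | o => o end.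
Definition mco (o : option kind) := match o with Some KHash => None | Some KUp => Some KDag | o => o end.
Definition mif (G : env) : env := fun i => mio (G i).
Definition mcf (G : env) : env := fun i => mco (G i).

Lemma mi_env_eq G G' : mi_env G G' -> G' = mif G /\ (forall i, G i <> Some KVar).
Proof. intros H; split. apply functional_extensionality; intro i; specialize (H i); unfold mif;
  destruct (G i) as [[]|]; simpl in *; tauto.
  intros i Hi; specialize (H i); rewrite Hi in H; auto. Qed.
Lemma mi_env_intro G : (forall i, G i <> Some KVar) -> mi_env G (mif G).
Proof. intros H i; specialize (H i); unfold mif; destruct (G i) as [[]|]; simpl; auto. Qed.
Lemma mc_env_eq G G' : mc_env G G' -> G' = mcf G /\ (forall i, G i <> Some KVar /\ G i <> Some KDown).
Proof. intros H; split. apply functional_extensionality; intro i; specialize (H i); unfold mcf;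
  destruct (G i) as [[]|]; simpl in *; tauto.
  intros i; specialize (H i); destruct (G i) as [[]|]; split; congruence. Qed.
Lemma mc_env_intro G : (forall i, G i <> Some KVar /\ G i <> Some KDown) -> mc_env G (mcf G).
Proof. intros H i; specialize (H i); unfold mcf; destruct (G i) as [[]|]; simpl; firstorder. Qed.

Definition insert (k : nat) (o : option kind) (G : env) : env :=
  fun i => if i <? k then G i else if i =? k then o else G (pred i).
Definition sh (k y : nat) := if y <? k then y else S y.
Definition remove (k : nat) (G : env) : env := fun y => G (sh k y).

Lemma insert_sh k o G y : insert k o G (sh k y) = G y.
Proof. unfold insert, sh. destruct (y <? k) eqn:E.
  rewrite E; auto. apply Nat.ltb_ge in E. destruct (S y <? k) eqn:E2. apply Nat.ltb_lt in E2; lia.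
  destruct (S y =? k) eqn:E3. apply Nat.eqb_eq in E3; lia. reflexivity. Qed.
Lemma insert_k k o G : insert k o G k = o.
Proof. unfold insert. rewrite Nat.ltb_irrefl, Nat.eqb_refl. auto. Qed.
Lemma insert_remove k G : G = insert k (G k) (remove k G).
Proof. apply functional_extensionality; intro i. unfold insert, remove, sh.
  destruct (i <? k) eqn:E. auto. destruct (i =? k) eqn:E2. apply Nat.eqb_eq in E2; subst; auto.
  apply Nat.ltb_ge in E; apply Nat.eqb_neq in E2. destruct (pred i <? k) eqn:E3. apply Nat.ltb_lt in E3; lia.
  f_equal; lia. Qed.
Lemma remove_insert k o G : remove k (insert k o G) = G.
Proof. apply functional_extensionality; intro y. apply insert_sh. Qed.
Lemma insert0 o G : insert 0 o G = ext o G.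
Proof. apply functional_extensionality; intros [|i]; reflexivity. Qed.
Lemma ext_insert q k o G : ext q (insert k o G) = insert (S k) o (ext q G).
Proof. apply functional_extensionality; intros [|i]. reflexivity. unfold insert; simpl.
  replace (S i <? S k) with (i <? k) by reflexivity.
  destruct (i <? k) eqn:E0; auto. destruct (i =? k) eqn:E; auto. apply Nat.eqb_neq in E. apply Nat.ltb_ge in E0.
  destruct i; [lia|reflexivity]. Qed.
Lemma mif_insert k o G : mif (insert k o G) = insert k (mio o) (mif G).
Proof. apply functional_extensionality; intro i; unfold mif, insert.
  destruct (i <? k); auto. destruct (i =? k); auto. Qed.
Lemma mcf_insert k o G : mcf (insert k o G) = insert k (mco o) (mcf G).
Proof. apply functional_extensionality; intro i; unfold mcf, insert.
  destruct (i <? k); auto. destruct (i =? k); auto. Qed.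
Lemma mif_ext o G : mif (ext o G) = ext (mio o) (mif G).
Proof. apply functional_extensionality; intros [|i]; reflexivity. Qed.
Lemma mcf_ext o G : mcf (ext o G) = ext (mco o) (mcf G).
Proof. apply functional_extensionality; intros [|i]; reflexivity. Qed.

Lemma sh_cases k i : i = k \/ exists y, i = sh k y.
Proof. unfold sh. destruct (Nat.lt_trichotomy i k) as [H|[H|H]].
  right; exists i. apply Nat.ltb_lt in H; rewrite H; auto. left; auto.
  right; exists (pred i). destruct (pred i <? k) eqn:E. apply Nat.ltb_lt in E; lia. lia. Qed.
Lemma sh_neq k y : sh k y <> k.
Proof. unfold sh; destruct (y <? k) eqn:E. apply Nat.ltb_lt in E; lia. apply Nat.ltb_ge in E; lia. Qed.
Lemma sh_inj k y z : sh k y = sh k z -> y = z.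
Proof. unfold sh; intro HH. destruct (Nat.ltb_spec y k), (Nat.ltb_spec z k); lia. Qed.

Lemma app_split_insert k o G G1 G2 : app_split (insert k o G) G1 G2 ->
  app_split G (remove k G1) (remove k G2) /\ asp o (G1 k) (G2 k).
Proof. intros H; split. intro y; specialize (H (sh k y)); rewrite insert_sh in H; exact H.
  specialize (H k); rewrite insert_k in H; exact H. Qed.

Ltac okd := repeat match goal with x : option kind |- _ => destruct x as [[]|] end; simpl in *; intuition congruence.
Ltac okclean := repeat (match goal with
 | H : _ /\ _ |- _ => destruct H
 | H : _ \/ _ |- _ => destruct H
 | H : ?x = ?v |- _ => is_var x; subst x
 | H : ?v = ?x |- _ => is_var x; subst x
 | H : Some _ = Some _ |- _ => injection H; clear H; intros
 end; simpl in * ); try discriminate.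
Ltac okall := intros; unfold lin_ok in *; simpl in *; okclean;
  repeat (match goal with x : option kind |- _ => destruct x as [[]|]; simpl in *; okclean
                        | x : kind |- _ => destruct x; simpl in *; okclean end);
  firstorder (try discriminate; try congruence).

Lemma der_bisim G M M' : der G M -> bisim M M' -> der G M'.
Proof.
  intros H B. apply der_coind with (X := fun G M' => exists M, bisim M M' /\ der G M).
  2: eauto. clear. intros G M' [M [B H]]. apply der_unfold in H.
  revert M' B; induction H; intros M' B; inversion B; subst.
  - eapply d_vl; eauto.
  - eapply d_vd; eauto.
  - eapply d_va; eauto.
  - eapply d_a; eauto.
  - eapply d_ll; eauto.
  - eapply d_li1; eauto.
  - eapply d_li2; eauto.
  - eapply d_lc; eauto.
  - eapply d_mi; eauto.
  - eapply d_mc; eauto.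
Qed.

Definition okeq_dec (a b : option kind) : {a = b} + {a <> b}.
Proof. decide equality. decide equality. Defined.

Definition wk (a b : option kind) : Prop :=
  b = a \/ (a = None /\ lin_ok b) \/ (a = Some KVar /\ b = Some KHash).
Definition Wk (G G' : env) := forall i, wk (G i) (G' i).
Definition sel (g g' g1 : option kind) := if okeq_dec g' g then g1 else g'.

Lemma wk_asp g g' g1 g2 : asp g g1 g2 -> wk g g' ->
  asp g' (sel g g' g1) (sel g g' g2) /\ wk g1 (sel g g' g1) /\ wk g2 (sel g g' g2).
Proof. unfold sel, wk, lin_ok. destruct (okeq_dec g' g). subst; intuition.
  intros A W; destruct W as [W|[W|W]]; [congruence| |]; okall. Qed.

Lemma wk_lin a b : lin_ok a -> wk a b -> lin_ok b.
Proof. unfold lin_ok, wk; intros; intuition (subst; try congruence; auto). Qed.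
Lemma wk_mio a b : a <> Some KVar -> wk a b -> wk (mio a) (mio b) /\ b <> Some KVar.
Proof. unfold wk; intros; okall. Qed.
Lemma wk_mco a b : a <> Some KVar /\ a <> Some KDown -> wk a b ->
   wk (mco a) (mco b) /\ b <> Some KVar /\ b <> Some KDown.
Proof. unfold wk; intros; okall. Qed.

Lemma der_wk G Gw M : der G M -> Wk G Gw -> der Gw M.
Proof.
  intros H W. apply der_coind with (X := fun Gw M => exists G, Wk G Gw /\ der G M).
  2: eauto. clear. intros Gw M [G [W H]]. apply der_unfold in H.
  revert Gw W; induction H; intros Gw W.
  - destruct (W x) as [E|[[E _]|[_ E]]]; try congruence.
    + eapply d_vl. congruence. intros y Hy; eapply wk_lin; eauto.
    + eapply d_vd. eauto. intros y Hy; eapply wk_lin; eauto.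
  - destruct (W x) as [E|[[E _]|[E _]]]; try congruence.
    eapply d_vd. congruence. intros y Hy; eapply wk_lin; eauto.
  - destruct (W x) as [E|[[E _]|[E _]]]; try congruence.
    eapply d_va. congruence. intros y Hy; eapply wk_lin; eauto.
  - apply d_a with (G1 := fun i => sel (G i) (Gw i) (G1 i)) (G2 := fun i => sel (G i) (Gw i) (G2 i)).
    + intro i; apply (wk_asp _ _ _ _ (H i) (W i)).
    + apply IHderI1; intro i; apply (wk_asp _ _ _ _ (H i) (W i)).
    + apply IHderI2; intro i; apply (wk_asp _ _ _ _ (H i) (W i)).
  - apply d_ll, IHderI. intros [|i]; [left; auto|apply W].
  - apply d_li1, IHderI. intros [|i]; [left; auto|apply W].
  - apply d_li2, IHderI. intros [|i]; [left; auto|apply W].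
  - apply d_lc, IHderI. intros [|i]; [left; auto|apply W].
  - apply mi_env_eq in H. destruct H as [-> H]. apply d_mi with (mif Gw).
    apply mi_env_intro. intro i; apply (wk_mio _ _ (H i) (W i)).
    apply IHderI. intro i; apply (wk_mio _ _ (H i) (W i)).
  - apply mc_env_eq in H. destruct H as [-> H]. apply d_mc with (mcf Gw).
    apply mc_env_intro. intro i; apply (wk_mco _ _ (H i) (W i)).
    left. exists (mcf G); split; auto. intro i; apply (wk_mco _ _ (H i) (W i)).
Qed.

Lemma der_lift G M c : der G M -> der (insert c None G) (lift c M).
Proof.
  intros H. apply der_coind with (X := fun G' M' => exists c G M, G' = insert c None G /\ M' = lift c M /\ der G M).
  2: eauto 10. clear. intros G' M' [c [G [M [-> [-> H]]]]]. apply der_unfold in H.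
  revert c; induction H; intro c.
  - rewrite lift_Var. change (if x <? c then x else S x) with (sh c x).
    apply d_vl. rewrite insert_sh; auto. intros y Hy. destruct (sh_cases c y) as [->|[z ->]].
    rewrite insert_k; left; auto. rewrite insert_sh. apply H0. intros ->; auto.
  - rewrite lift_Var. change (if x <? c then x else S x) with (sh c x).
    apply d_vd. rewrite insert_sh; auto. intros y Hy. destruct (sh_cases c y) as [->|[z ->]].
    rewrite insert_k; left; auto. rewrite insert_sh. apply H0. intros ->; auto.
  - rewrite lift_Var. change (if x <? c then x else S x) with (sh c x).
    apply d_va. rewrite insert_sh; auto. intros y Hy. destruct (sh_cases c y) as [->|[z ->]].
    rewrite insert_k; left; auto. rewrite insert_sh. apply H0. intros ->; auto.
  - rewrite lift_App. apply d_a with (insert c None G1) (insert c None G2); auto.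
    intro i. destruct (sh_cases c i) as [->|[z ->]]. rewrite !insert_k; simpl; auto.
    rewrite !insert_sh. apply H.
  - rewrite lift_Lam. apply d_ll. rewrite ext_insert. apply IHderI.
  - rewrite lift_LamI. apply d_li1. rewrite ext_insert. apply IHderI.
  - rewrite lift_LamI. apply d_li2. rewrite ext_insert. apply IHderI.
  - rewrite lift_LamC. apply d_lc. rewrite ext_insert. apply IHderI.
  - rewrite lift_BoxI. apply mi_env_eq in H. destruct H as [-> H]. apply d_mi with (mif (insert c None G)).
    apply mi_env_intro. intro i. destruct (sh_cases c i) as [->|[z ->]]. rewrite insert_k; congruence.
    rewrite insert_sh; auto. rewrite mif_insert. apply IHderI.
  - rewrite lift_BoxC. apply mc_env_eq in H. destruct H as [-> H]. apply d_mc with (mcf (insert c None G)).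
    apply mc_env_intro. intro i. destruct (sh_cases c i) as [->|[z ->]]. rewrite insert_k; split; congruence.
    rewrite insert_sh; auto. rewrite mcf_insert. left. exists c, (mcf G), M; auto.
Qed.

Lemma der_lift0 G M : der G M -> der (ext None G) (lift 0 M).
Proof. intros H; rewrite <- insert0; apply der_lift; auto. Qed.

Lemma subst_Var_sh k N y : subst k N (Var (sh k y)) = Var y.
Proof. rewrite subst_Var. unfold sh. destruct (Nat.ltb_spec y k).
  destruct (Nat.eqb_spec y k); [lia|]. destruct (Nat.ltb_spec k y); [lia|auto].
  destruct (Nat.eqb_spec (S y) k); [lia|]. destruct (Nat.ltb_spec k (S y)); [auto|lia]. Qed.
Lemma subst_Var_k k N : subst k N (Var k) = N.
Proof. rewrite subst_Var, Nat.eqb_refl; auto. Qed.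

Lemma lin_rest k p E y : (forall z, z <> sh k y -> lin_ok (insert k p E z)) -> forall z, z <> y -> lin_ok (E z).
Proof. intros H z Hz. rewrite <- (insert_sh k p E z). apply H. intro HH; apply sh_inj in HH; auto. Qed.
Lemma lin_rest_k k p E : (forall z, z <> k -> lin_ok (insert k p E z)) -> forall z, lin_ok (E z).
Proof. intros H z. rewrite <- (insert_sh k p E z). apply H. apply sh_neq. Qed.

Definition okp (p o : option kind) := o = Some KDag \/ (p = Some KUp /\ o = Some KUp).
Definition pshared (p : option kind) := p = None \/ p = Some KUp \/ p = Some KDag.

Lemma okp_asp p e a b : okp p e -> asp e a b -> okp p a /\ okp p b.
Proof. unfold okp; intros; okall. Qed.
Lemma psh_asp p a b : pshared p -> asp p a b -> a = p /\ b = p.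
Proof. unfold pshared; intros; okall. Qed.
Lemma okp_mio p e : okp p e -> okp p (mio e).
Proof. unfold okp; intros; okall. Qed.
Lemma okp_mco p e : okp p e -> okp (mco p) (mco e).
Proof. unfold okp; intros; okall. Qed.
Lemma psh_mio p : pshared p -> mio p = p.
Proof. unfold pshared; intros; okall. Qed.
Lemma psh_mco p : pshared p -> pshared (mco p) /\ (mco p <> None -> p <> None).
Proof. unfold pshared; intros; okall. Qed.
Lemma okp_lin p e : lin_ok e -> okp p e -> e = Some KDag \/ (p = Some KUp /\ e = Some KUp).
Proof. unfold okp; intros; okall. Qed.

Lemma der_subst_sh k p E M Gd N : der (insert k p E) M -> pshared p -> (p <> None -> der Gd N) ->
  (forall i, Gd i = None \/ (Gd i = Some KDag /\ okp p (E i))) -> der E (subst k N M).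
Proof.
  intros H1 H2 H3 H4.
  apply der_coind with (X := fun E M' => exists k p M Gd N, M' = subst k N M /\ der (insert k p E) M /\
     pshared p /\ (p <> None -> der Gd N) /\ (forall i, Gd i = None \/ (Gd i = Some KDag /\ okp p (E i)))).
  2: eauto 12. clear. intros E M' [k [p [M [Gd [Q [-> [H [Hp [HN HGd]]]]]]]]].
  apply der_unfold in H. remember (insert k p E) as Gm eqn:HG.
  revert k p E Gd Q HG Hp HN HGd; induction H; intros k p E Gd Q HG Hp HN HGd; subst G.
  - destruct (sh_cases k x) as [->|[y ->]].
    + rewrite insert_k in H. unfold pshared in Hp; intuition congruence.
    + rewrite subst_Var_sh. apply d_vl. rewrite insert_sh in H; auto. eapply lin_rest; eauto.
  - destruct (sh_cases k x) as [->|[y ->]].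
    + rewrite insert_k in H. unfold pshared in Hp; intuition congruence.
    + rewrite subst_Var_sh. apply d_vd. rewrite insert_sh in H; auto. eapply lin_rest; eauto.
  - destruct (sh_cases k x) as [->|[y ->]].
    + rewrite insert_k in H. subst p. rewrite subst_Var_k.
      assert (HE : der E Q). { apply der_wk with Gd. apply HN; congruence.
        intro i. destruct (HGd i) as [->|[-> Ho]]. right; left; split; auto.
        apply (lin_rest_k k (Some KDag) E H0).
        left. destruct Ho as [->|[? _]]; congruence. }
      apply der_unfold in HE. apply derI_mono with der; auto.
    + rewrite subst_Var_sh. apply d_va. rewrite insert_sh in H; auto. eapply lin_rest; eauto.
  - rewrite subst_App. apply app_split_insert in H. destruct H as [Hs Hk].
    destruct (psh_asp _ _ _ Hp Hk) as [Hk1 Hk2].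
    apply d_a with (remove k G1) (remove k G2); auto.
    + eapply IHderI1; eauto. rewrite <- Hk1; apply insert_remove.
      intro i; destruct (HGd i) as [Hi|[Hi Ho]]; auto. right; split; auto. apply (okp_asp _ _ _ _ Ho (Hs i)).
    + eapply IHderI2; eauto. rewrite <- Hk2; apply insert_remove.
      intro i; destruct (HGd i) as [Hi|[Hi Ho]]; auto. right; split; auto. apply (okp_asp _ _ _ _ Ho (Hs i)).
  - rewrite subst_Lam. apply d_ll. eapply IHderI with (Gd := ext None Gd); eauto.
    apply ext_insert. intros; apply der_lift0; auto. intros [|i]; simpl; auto.
  - rewrite subst_LamI. apply d_li1. eapply IHderI with (Gd := ext None Gd); eauto.
    apply ext_insert. intros; apply der_lift0; auto. intros [|i]; simpl; auto.
  - rewrite subst_LamI. apply d_li2. eapply IHderI with (Gd := ext None Gd); eauto.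
    apply ext_insert. intros; apply der_lift0; auto. intros [|i]; simpl; auto.
  - rewrite subst_LamC. apply d_lc. eapply IHderI with (Gd := ext None Gd); eauto.
    apply ext_insert. intros; apply der_lift0; auto. intros [|i]; simpl; auto.
  - rewrite subst_BoxI. apply mi_env_eq in H. destruct H as [-> H].
    apply d_mi with (mif E). apply mi_env_intro. intro i; rewrite <- (insert_sh k p E i); auto.
    eapply IHderI; eauto. rewrite mif_insert, psh_mio; auto.
    intro i; destruct (HGd i) as [Hi|[Hi Ho]]; auto. right; split; auto. apply okp_mio; auto.
  - rewrite subst_BoxC. apply mc_env_eq in H. destruct H as [-> H].
    apply d_mc with (mcf E). apply mc_env_intro. intro i; rewrite <- (insert_sh k p E i); auto.
    left. destruct (psh_mco p Hp) as [Hp1 Hp2].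
    exists k, (mco p), M, Gd, Q. split; auto. split. rewrite <- mcf_insert; auto.
    split; auto. split; auto.
    intro i; destruct (HGd i) as [Hi|[Hi Ho]]; auto. right; split; auto. apply okp_mco; auto.
Qed.

Lemma der_strengthen k E M N : der (insert k None E) M -> der E (subst k N M).
Proof. intros H. apply der_subst_sh with None (fun _ => None); auto.
  left; auto. intros H'; congruence. Qed.

Definition e1 (n a : option kind) := match n with None => a | o => o end.
Lemma lin_split1 e r n a b : asp e r n -> asp r a b -> asp (e1 n a) a n /\ asp e (e1 n a) b.
Proof. unfold e1; intros; okall. Qed.
Lemma lin_split2 e r n a b : asp e r n -> asp r a b -> asp (e1 n b) b n /\ asp e a (e1 n b).
Proof. unfold e1; intros; okall. Qed.
Lemma lin_leaf e r n : asp e r n -> lin_ok r -> wk n e.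
Proof. unfold wk; intros; okall. Qed.
Lemma asp_lin_k o a b : asp (Some o) a b -> o = KVar \/ o = KDown ->
  (a = Some o /\ b = None) \/ (a = None /\ b = Some o).
Proof. intros; okall. Qed.

Definition shq (q : option kind) := match q with Some KVar | Some KDown => None | o => o end.
Lemma shq_ok q : q = Some KVar \/ q = Some KHash \/ q = Some KDown \/ q = Some KUp ->
  asp q q (shq q) /\ wk None (shq q).
Proof. unfold wk; intros; okall. Qed.

Lemma app_split_ext q G G1 G2 : asp q q (shq q) -> app_split G G1 G2 -> app_split (ext q G) (ext q G1) (ext (shq q) G2).
Proof. intros H1 H2 [|i]; simpl; auto. apply H2. Qed.

Lemma lift_wk q Gn Q : q = Some KVar \/ q = Some KHash \/ q = Some KDown \/ q = Some KUp ->
  der Gn Q -> der (ext (shq q) Gn) (lift 0 Q).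
Proof. intros Hq H. apply der_wk with (ext None Gn). apply der_lift0; auto.
  intros [|i]; simpl. apply shq_ok; auto. left; auto. Qed.

Lemma der_subst_lin k E Gr Gn M Q : derI der (insert k (Some KVar) Gr) M -> app_split E Gr Gn ->
  der Gn Q -> derI der E (subst k Q M).
Proof.
  intros H. remember (insert k (Some KVar) Gr) as Gm eqn:HG.
  revert k Gr E Gn Q HG; induction H; intros k Gr E Gn Q HG HS HQ; subst G.
  - destruct (sh_cases k x) as [->|[y ->]].
    + rewrite subst_Var_k. apply der_unfold, der_wk with Gn; auto.
      intro i. apply lin_leaf with (Gr i); [apply HS | apply (lin_rest_k k _ _ H0)].
    + exfalso. specialize (H0 k (not_eq_sym (sh_neq k y))). rewrite insert_k in H0. unfold lin_ok in H0; intuition congruence.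
  - exfalso. destruct (sh_cases k x) as [->|[y ->]]. rewrite insert_k in H; congruence.
    specialize (H0 k (not_eq_sym (sh_neq k y))). rewrite insert_k in H0. unfold lin_ok in H0; intuition congruence.
  - exfalso. destruct (sh_cases k x) as [->|[y ->]]. rewrite insert_k in H; congruence.
    specialize (H0 k (not_eq_sym (sh_neq k y))). rewrite insert_k in H0. unfold lin_ok in H0; intuition congruence.
  - rewrite subst_App. apply app_split_insert in H. destruct H as [Hs Hk].
    destruct (asp_lin_k _ _ _ Hk (or_introl eq_refl)) as [[Hk1 Hk2]|[Hk1 Hk2]].
    + apply d_a with (fun i => e1 (Gn i) (remove k G1 i)) (remove k G2).
      intro i; apply (lin_split1 _ _ _ _ _ (HS i) (Hs i)).
      eapply IHderI1; eauto. rewrite <- Hk1; apply insert_remove.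
      intro i; apply (lin_split1 _ _ _ _ _ (HS i) (Hs i)).
      apply der_unfold, der_strengthen. rewrite <- Hk2, <- insert_remove. apply der_fold; auto.
    + apply d_a with (remove k G1) (fun i => e1 (Gn i) (remove k G2 i)).
      intro i; apply (lin_split2 _ _ _ _ _ (HS i) (Hs i)).
      apply der_unfold, der_strengthen. rewrite <- Hk1, <- insert_remove. apply der_fold; auto.
      eapply IHderI2; eauto. rewrite <- Hk2; apply insert_remove.
      intro i; apply (lin_split2 _ _ _ _ _ (HS i) (Hs i)).
  - rewrite subst_Lam. apply d_ll. eapply IHderI with (Gn := ext (shq (Some KVar)) Gn). apply ext_insert.
    apply app_split_ext; [apply shq_ok; auto | exact HS]. apply lift_wk; auto.
  - rewrite subst_LamI. apply d_li1. eapply IHderI with (Gn := ext (shq (Some KHash)) Gn). apply ext_insert.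
    apply app_split_ext; [apply shq_ok; auto | exact HS]. apply lift_wk; auto.
  - rewrite subst_LamI. apply d_li2. eapply IHderI with (Gn := ext (shq (Some KDown)) Gn). apply ext_insert.
    apply app_split_ext; [apply shq_ok; auto | exact HS]. apply lift_wk; auto.
  - rewrite subst_LamC. apply d_lc. eapply IHderI with (Gn := ext (shq (Some KUp)) Gn). apply ext_insert.
    apply app_split_ext; [apply shq_ok; auto | exact HS]. apply lift_wk; auto.
  - exfalso. specialize (H k). rewrite insert_k in H. auto.
  - exfalso. specialize (H k). rewrite insert_k in H. auto.
Qed.

Lemma mi_asp e r n : asp e r n -> r <> Some KVar -> n <> Some KVar ->
  asp (mio e) (mio r) (mio n) /\ e <> Some KVar.
Proof. intros; okall. Qed.

Lemma der_subst_down k E Gr Gn M Q : derI der (insert k (Some KDown) Gr) M -> app_split E Gr Gn ->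
  der Gn (BoxI Q) -> derI der E (subst k Q M).
Proof.
  intros H. remember (insert k (Some KDown) Gr) as Gm eqn:HG.
  revert k Gr E Gn Q HG; induction H; intros k Gr E Gn Q HG HS HQ; subst G.
  - exfalso. destruct (sh_cases k x) as [->|[y ->]]. rewrite insert_k in H; congruence.
    specialize (H0 k (not_eq_sym (sh_neq k y))). rewrite insert_k in H0. unfold lin_ok in H0; intuition congruence.
  - exfalso. destruct (sh_cases k x) as [->|[y ->]]. rewrite insert_k in H; congruence.
    specialize (H0 k (not_eq_sym (sh_neq k y))). rewrite insert_k in H0. unfold lin_ok in H0; intuition congruence.
  - exfalso. destruct (sh_cases k x) as [->|[y ->]]. rewrite insert_k in H; congruence.
    specialize (H0 k (not_eq_sym (sh_neq k y))). rewrite insert_k in H0. unfold lin_ok in H0; intuition congruence.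
  - rewrite subst_App. apply app_split_insert in H. destruct H as [Hs Hk].
    destruct (asp_lin_k _ _ _ Hk (or_intror eq_refl)) as [[Hk1 Hk2]|[Hk1 Hk2]].
    + apply d_a with (fun i => e1 (Gn i) (remove k G1 i)) (remove k G2).
      intro i; apply (lin_split1 _ _ _ _ _ (HS i) (Hs i)).
      eapply IHderI1; eauto. rewrite <- Hk1; apply insert_remove.
      intro i; apply (lin_split1 _ _ _ _ _ (HS i) (Hs i)).
      apply der_unfold, der_strengthen. rewrite <- Hk2, <- insert_remove. apply der_fold; auto.
    + apply d_a with (remove k G1) (fun i => e1 (Gn i) (remove k G2 i)).
      intro i; apply (lin_split2 _ _ _ _ _ (HS i) (Hs i)).
      apply der_unfold, der_strengthen. rewrite <- Hk1, <- insert_remove. apply der_fold; auto.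
      eapply IHderI2; eauto. rewrite <- Hk2; apply insert_remove.
      intro i; apply (lin_split2 _ _ _ _ _ (HS i) (Hs i)).
  - rewrite subst_Lam. apply d_ll. eapply IHderI with (Gn := ext (shq (Some KVar)) Gn). apply ext_insert.
    apply app_split_ext; [apply shq_ok; auto | exact HS]. rewrite <- lift_BoxI. apply lift_wk; auto.
  - rewrite subst_LamI. apply d_li1. eapply IHderI with (Gn := ext (shq (Some KHash)) Gn). apply ext_insert.
    apply app_split_ext; [apply shq_ok; auto | exact HS]. rewrite <- lift_BoxI. apply lift_wk; auto.
  - rewrite subst_LamI. apply d_li2. eapply IHderI with (Gn := ext (shq (Some KDown)) Gn). apply ext_insert.
    apply app_split_ext; [apply shq_ok; auto | exact HS]. rewrite <- lift_BoxI. apply lift_wk; auto.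
  - rewrite subst_LamC. apply d_lc. eapply IHderI with (Gn := ext (shq (Some KUp)) Gn). apply ext_insert.
    apply app_split_ext; [apply shq_ok; auto | exact HS]. rewrite <- lift_BoxI. apply lift_wk; auto.
  - rewrite subst_BoxI. apply mi_env_eq in H. destruct H as [-> H].
    apply der_unfold in HQ. inversion HQ; subst. apply mi_env_eq in H2. destruct H2 as [-> H2].
    assert (HGr : forall i, Gr i <> Some KVar). { intro i; rewrite <- (insert_sh k (Some KDown) Gr i); auto. }
    apply d_mi with (mif E). apply mi_env_intro. intro i; apply (mi_asp _ _ _ (HS i) (HGr i) (H2 i)).
    apply der_subst_lin with (mif Gr) (mif Gn). rewrite mif_insert in H0; exact H0.
    intro i; apply (mi_asp _ _ _ (HS i) (HGr i) (H2 i)). apply der_fold; auto.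
  - exfalso. specialize (H k). rewrite insert_k in H. auto.
Qed.

Definition hs (e r n : option kind) := (n = None /\ e = r) \/ (n = Some KVar /\ r = None /\ e = Some KHash) \/
  (n = r /\ e = r /\ (n = Some KUp \/ n = Some KDag)).
Definition hsel (n a : option kind) := match n with Some KVar => Some KHash | _ => a end.
Lemma hs_split e r n a b : hs e r n -> asp r a b ->
  asp e (hsel n a) (hsel n b) /\ hs (hsel n a) a n /\ hs (hsel n b) b n.
Proof. unfold hs, hsel; intros; okall. Qed.
Lemma hs_leaf e r n : hs e r n -> lin_ok r -> wk n e.
Proof. unfold hs, wk; intros; okall. Qed.
Lemma hs_var e r n : hs e r n -> r <> None -> e = r.
Proof. unfold hs; intros; okall. Qed.
Lemma hs_lin e r n : hs e r n -> lin_ok r -> lin_ok e.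
Proof. unfold hs; intros; okall. Qed.
Lemma hs_mi e r n : hs e r n -> r <> Some KVar -> mio e = mio r /\ e <> Some KVar.
Proof. unfold hs; intros; okall. Qed.
Lemma hs_mc e r n : hs e r n -> r <> Some KVar /\ r <> Some KDown -> mco e = mco r /\ (e <> Some KVar /\ e <> Some KDown).
Proof. unfold hs; intros; okall. Qed.

Lemma der_subst_hash k E Gr Gn M Q : derI der (insert k (Some KHash) Gr) M -> (forall i, hs (E i) (Gr i) (Gn i)) ->
  der Gn Q -> derI der E (subst k Q M).
Proof.
  intros H. remember (insert k (Some KHash) Gr) as Gm eqn:HG.
  revert k Gr E Gn Q HG; induction H; intros k Gr E Gn Q HG HS HQ; subst G.
  - destruct (sh_cases k x) as [->|[y ->]]. rewrite insert_k in H; congruence.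
    rewrite subst_Var_sh. rewrite insert_sh in H. apply d_vl. rewrite (hs_var _ _ _ (HS y)); congruence.
    intros z Hz. apply hs_lin with (Gr z) (Gn z); auto. eapply lin_rest; eauto.
  - destruct (sh_cases k x) as [->|[y ->]].
    + rewrite subst_Var_k. apply der_unfold, der_wk with Gn; auto.
      intro i. apply hs_leaf with (Gr i); [apply HS | apply (lin_rest_k k _ _ H0)].
    + rewrite subst_Var_sh. rewrite insert_sh in H. apply d_vd. rewrite (hs_var _ _ _ (HS y)); congruence.
      intros z Hz. apply hs_lin with (Gr z) (Gn z); auto. eapply lin_rest; eauto.
  - destruct (sh_cases k x) as [->|[y ->]]. rewrite insert_k in H; congruence.
    rewrite subst_Var_sh. rewrite insert_sh in H. apply d_va. rewrite (hs_var _ _ _ (HS y)); congruence.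
    intros z Hz. apply hs_lin with (Gr z) (Gn z); auto. eapply lin_rest; eauto.
  - rewrite subst_App. apply app_split_insert in H. destruct H as [Hs Hk].
    simpl in Hk. destruct Hk as [Hk1 Hk2].
    apply d_a with (fun i => hsel (Gn i) (remove k G1 i)) (fun i => hsel (Gn i) (remove k G2 i)).
    intro i; apply (hs_split _ _ _ _ _ (HS i) (Hs i)).
    eapply IHderI1; eauto. rewrite <- Hk1; apply insert_remove.
    intro i; apply (hs_split _ _ _ _ _ (HS i) (Hs i)).
    eapply IHderI2; eauto. rewrite <- Hk2; apply insert_remove.
    intro i; apply (hs_split _ _ _ _ _ (HS i) (Hs i)).
  - rewrite subst_Lam. apply d_ll. eapply IHderI with (Gn := ext None Gn). apply ext_insert.
    intros [|i]; simpl; [left; auto|apply HS]. apply der_lift0; auto.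
  - rewrite subst_LamI. apply d_li1. eapply IHderI with (Gn := ext None Gn). apply ext_insert.
    intros [|i]; simpl; [left; auto|apply HS]. apply der_lift0; auto.
  - rewrite subst_LamI. apply d_li2. eapply IHderI with (Gn := ext None Gn). apply ext_insert.
    intros [|i]; simpl; [left; auto|apply HS]. apply der_lift0; auto.
  - rewrite subst_LamC. apply d_lc. eapply IHderI with (Gn := ext None Gn). apply ext_insert.
    intros [|i]; simpl; [left; auto|apply HS]. apply der_lift0; auto.
  - rewrite subst_BoxI. apply mi_env_eq in H. destruct H as [-> H].
    assert (HGr : forall i, Gr i <> Some KVar). { intro i; rewrite <- (insert_sh k (Some KHash) Gr i); auto. }
    apply d_mi with (mif E). apply mi_env_intro. intro i; apply (hs_mi _ _ _ (HS i) (HGr i)).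
    replace (mif E) with (mif Gr). apply der_unfold, der_strengthen. rewrite mif_insert in H0.
    apply der_fold; auto.
    apply functional_extensionality; intro i; symmetry; apply (hs_mi _ _ _ (HS i) (HGr i)).
  - rewrite subst_BoxC. apply mc_env_eq in H. destruct H as [-> H].
    assert (HGr : forall i, Gr i <> Some KVar /\ Gr i <> Some KDown). { intro i; rewrite <- (insert_sh k (Some KHash) Gr i); auto. }
    apply d_mc with (mcf E). apply mc_env_intro. intro i; apply (hs_mc _ _ _ (HS i) (HGr i)).
    replace (mcf E) with (mcf Gr). apply der_strengthen. rewrite mcf_insert in H0. auto.
    apply functional_extensionality; intro i; symmetry; apply (hs_mc _ _ _ (HS i) (HGr i)).
Qed.

Lemma bisim_sym M N : bisim M N -> bisim N M.
Proof. revert M N; cofix CH; intros M N H; destruct H; constructor; apply CH; assumption. Qed.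

Definition pr (g d : option kind) := d = g \/ (g = Some KDown /\ d = Some KHash).
Lemma env_prec_iff G D : env_prec G D <-> forall i, pr (G i) (D i).
Proof. reflexivity. Qed.
Lemma prec_refl G : env_prec G G.
Proof. intro i; left; auto. Qed.

Definition dl (g g2 : option kind) := match g2 with Some KDown => Some KHash | _ => g end.
Lemma hash_top g g1 g2 : asp g g1 g2 -> g2 <> Some KVar -> hs (dl g g2) g1 (mio g2) /\ pr g (dl g g2).
Proof. unfold hs, pr, dl; intros; okall. Qed.
Lemma up_top g g1 g2 : asp g g1 g2 -> g2 <> Some KVar /\ g2 <> Some KDown ->
  g = g1 /\ (mco g2 = None \/ (mco g2 = Some KDag /\ okp (Some KUp) g1)).
Proof. unfold okp; intros; okall. Qed.

Ltac nm := try match goal with h : app_split _ _ _ |- _ => rename h into HA end;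
  try match goal with h : mi_env _ _ |- _ => rename h into HMI end;
  try match goal with h : mc_env _ _ |- _ => rename h into HMC end.

Lemma redex G0 L P : der G0 L -> basic L P -> exists D0, env_prec G0 D0 /\ der D0 P.
Proof.
  intros H B. apply der_unfold in H. destruct B.
  - inversion H; subst. match goal with h : derI der _ (Lam _) |- _ => inversion h; subst end.
    exists G0; split. apply prec_refl. nm.
    apply der_fold. eapply der_subst_lin. rewrite insert0; eauto. eauto. apply der_fold; eauto.
  - inversion H; subst. match goal with h : derI der _ (BoxI _) |- _ => inversion h; subst end.
    match goal with h : derI der _ (LamI _) |- _ => inversion h; subst end; nm.
    +
      apply mi_env_eq in HMI. destruct HMI as [-> H2].
      exists (fun i => dl (G0 i) (G2 i)). split.
      intro i; apply (hash_top _ _ _ (HA i) (H2 i)).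
      apply der_fold. eapply der_subst_hash with (Gr := G1) (Gn := mif G2). rewrite insert0; eauto.
      intro i; apply (hash_top _ _ _ (HA i) (H2 i)). apply der_fold; eauto.
    +
      exists G0; split. apply prec_refl.
      apply der_fold. eapply der_subst_down. rewrite insert0; eauto. eauto. apply der_fold; eauto.
  - inversion H; subst. match goal with h : derI der _ (BoxC _) |- _ => inversion h; subst end.
    match goal with h : derI der _ (LamC _) |- _ => inversion h; subst end; nm.
    apply mc_env_eq in HMC. destruct HMC as [-> H2].
    exists G0; split. apply prec_refl.
    replace G0 with G1. apply der_subst_sh with (k:=0) (p:=Some KUp) (Gd := mcf G2).
    rewrite insert0. apply der_fold; eauto. right; left; auto. auto.
    intro i; apply (up_top _ _ _ (HA i) (H2 i)).
    apply functional_extensionality; intro i; symmetry; apply (up_top _ _ _ (HA i) (H2 i)).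
Qed.

Definition cp (g g1 d1 : option kind) := match g1, d1 with Some KDown, Some KHash => Some KHash | _, _ => g end.
Lemma cp_l g g1 g2 d1 : asp g g1 g2 -> pr g1 d1 ->
  asp (cp g g1 d1) d1 (cp g2 g1 d1) /\ wk g2 (cp g2 g1 d1) /\ pr g (cp g g1 d1).
Proof. unfold pr, wk, cp; intros; okall. Qed.
Lemma cp_r g g1 g2 d2 : asp g g1 g2 -> pr g2 d2 ->
  asp (cp g g2 d2) (cp g1 g2 d2) d2 /\ wk g1 (cp g1 g2 d2) /\ pr g (cp g g2 d2).
Proof. unfold pr, wk, cp; intros; okall. Qed.

Lemma prec_noDown G D : (forall i, G i <> Some KDown) -> env_prec G D -> D = G.
Proof. intros H1 H2; apply functional_extensionality; intro i. destruct (H2 i) as [|[]]; auto. exfalso; eapply H1; eauto. Qed.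

Lemma prec_ext q G D0 : env_prec (ext q G) D0 -> env_prec G (fun i => D0 (S i)) /\
   (D0 = ext q (fun i => D0 (S i)) \/ (q = Some KDown /\ D0 = ext (Some KHash) (fun i => D0 (S i)))).
Proof. intros H. split. intro i; apply (H (S i)).
  destruct (H 0) as [E|[E1 E2]]; simpl in *.
  - left; apply functional_extensionality; intros [|i]; auto.
  - right; split; auto; apply functional_extensionality; intros [|i]; auto. Qed.

Lemma ctx_lemma C L P : (forall G0, der G0 L -> exists D0, env_prec G0 D0 /\ der D0 P) ->
  forall G, der G (plug C L) -> exists D, env_prec G D /\ der D (plug C P).
Proof.
  intros HR. induction C; intros G H; simpl in *; auto; apply der_unfold in H; inversion H; subst; nm.
  - match goal with h : derI der ?Gx (plug C L) |- _ => destruct (IHC Gx (der_fold _ _ h)) as [D1 [HD1 HD1']] end.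
    exists (fun i => cp (G i) (G1 i) (D1 i)). split.
    intro i; apply (cp_l _ _ _ _ (HA i) (HD1 i)).
    apply der_fold. apply d_a with D1 (fun i => cp (G2 i) (G1 i) (D1 i)).
    intro i; apply (cp_l _ _ _ _ (HA i) (HD1 i)). apply der_unfold; auto.
    apply der_unfold, der_wk with G2. apply der_fold; auto. intro i; apply (cp_l _ _ _ _ (HA i) (HD1 i)).
  - match goal with h : derI der ?Gx (plug C L) |- _ => destruct (IHC Gx (der_fold _ _ h)) as [D2 [HD2 HD2']] end.
    exists (fun i => cp (G i) (G2 i) (D2 i)). split.
    intro i; apply (cp_r _ _ _ _ (HA i) (HD2 i)).
    apply der_fold. apply d_a with (fun i => cp (G1 i) (G2 i) (D2 i)) D2.
    intro i; apply (cp_r _ _ _ _ (HA i) (HD2 i)).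
    apply der_unfold, der_wk with G1. apply der_fold; auto. intro i; apply (cp_r _ _ _ _ (HA i) (HD2 i)).
    apply der_unfold; auto.
  - match goal with h : derI der ?Gx (plug C L) |- _ => destruct (IHC Gx (der_fold _ _ h)) as [D0 [HD HD']] end. apply prec_ext in HD. destruct HD as [HD [E|[E _]]].
    + eexists; split; eauto. apply der_fold, d_ll. rewrite <- E. apply der_unfold; auto.
    + discriminate.
  - match goal with h : derI der ?Gx (plug C L) |- _ => destruct (IHC Gx (der_fold _ _ h)) as [D0 [HD HD']] end. apply prec_ext in HD. destruct HD as [HD [E|[E _]]].
    + eexists; split; eauto. apply der_fold, d_li1. rewrite <- E. apply der_unfold; auto.
    + discriminate.
  - match goal with h : derI der ?Gx (plug C L) |- _ => destruct (IHC Gx (der_fold _ _ h)) as [D0 [HD HD']] end. apply prec_ext in HD. destruct HD as [HD [E|[_ E]]].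
    + eexists; split; eauto. apply der_fold, d_li2. rewrite <- E. apply der_unfold; auto.
    + eexists; split; eauto. apply der_fold, d_li1. rewrite <- E. apply der_unfold; auto.
  - match goal with h : derI der ?Gx (plug C L) |- _ => destruct (IHC Gx (der_fold _ _ h)) as [D0 [HD HD']] end. apply prec_ext in HD. destruct HD as [HD [E|[E _]]].
    + eexists; split; eauto. apply der_fold, d_lc. rewrite <- E. apply der_unfold; auto.
    + discriminate.
  - match goal with h : derI der ?Gx (plug C L) |- _ => destruct (IHC Gx (der_fold _ _ h)) as [D0 [HD HD']] end.
    apply prec_noDown in HD. subst D0. exists G; split. apply prec_refl. apply der_fold; eapply d_mi; eauto.
    apply der_unfold; auto.
    apply mi_env_eq in HMI. destruct HMI as [-> _]. intro i; unfold mif; destruct (G i) as [[]|]; simpl; congruence.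
  - match goal with h : der ?Gx (plug C L) |- _ => destruct (IHC Gx h) as [D0 [HD HD']] end.
    apply prec_noDown in HD. subst D0. exists G; split. apply prec_refl. apply der_fold; eapply d_mc; eauto.
    apply mc_env_eq in HMC. destruct HMC as [-> H2]. intro i; unfold mcf; specialize (H2 i); destruct (G i) as [[]|]; simpl; intuition congruence.
Qed.

Theorem mainTheorem11 (G : env) (M N : term) :
  env_finite G -> der G M -> red M N ->
  exists D : env, env_prec G D /\ der D N.
Proof.
  intros _ H [C [L [P [B [B1 B2]]]]].
  apply der_bisim with (M' := plug C L) in H; auto.
  destruct (ctx_lemma C L P (fun G0 HG0 => redex G0 L P HG0 B) G H) as [D [HD HD']].
  exists D; split; auto. apply der_bisim with (plug C P); auto. apply bisim_sym; auto.
Qed.
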